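(* Let $(I,\preceq)$ be a finite poset; for each $i\in I$ let $X_i$ be a finite set with $|X_i|\ge2$ and $P_i$ a Markov chain on $X_i$, and let $\mathbb{L}_i$ be the set of all partitions of $X_i$ with respect to which $P_i$ is lumpable. Let $\{p_i^0\}_{i\in I}$ be a strict probability measure on $I$ and $\mathcal{P}$ the generalized crested product of the $P_i$ defined by $(I,\preceq)$ and $\{p_i^0\}$. For each $i\in I$ let $\Phi_i:X_{A(i)}\to\mathbb{L}_i$ be a map (when $A(i)=\emptyset$, $X_{A(i)}$ is a one-point set and $\Phi_i$ is a single choice of a partition in $\mathbb L_i$), such that $\Phi_i(x_{A(i)})=\Phi_i(y_{A(i)})$ whenever, for every $j\in A(i)$, $\Phi_j(x_{A(j)})=\Phi_j(y_{A(j)})$ and $x_j,y_j$ lie in the same part of this partition. Let $\mathcal{L}$ be the partition of $X=\prod_{i\in I}X_i$ (the generalized product of lumpings) into the classes of the relation: $x\approx y$ iff for every $i\in I$, $\Phi_i(x_{A(i)})=\Phi_i(y_{A(i)})$ and $x_i,y_i$ lie in the same part of this partition of $X_i$. Then $\mathcal{P}$ is lumpable with respect to $\mathcal{L}$.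
   Context: $A(i)=\{j\in I: j\succ i\}$, $H(i)=\{j\in I:j\prec i\}$, $H[i]=H(i)\sqcup\{i\}$; for $J\subseteq I$, $X_J=\prod_{j\in J}X_j$ and $x_J$ is the projection of $x$ onto $X_J$. The generalized crested product is the chain on $X$ with $p(x,y)=\sum_{i\in I}p_i^0\,p_i(x_i,y_i)\prod_{j\in H(i)}\frac{1}{|X_j|}\prod_{j\notin H[i]}\delta(x_j,y_j)$ ($\delta$ the Kronecker delta, $p_i^0>0$, $\sum_ip_i^0=1$). A chain $p$ is lumpable with respect to a partition if for all parts $L,L'$ the map $x\mapsto\sum_{y\in L'}p(x,y)$ is constant on $L$. *)

(* Defs.v *)
From mathcomp Require Import all_boot all_order all_algebra.
Set Implicit Arguments. Unset Strict Implicit. Unset Printing Implicit Defensive.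
Import Order.TTheory GRing.Theory Num.Theory.
Local Open Scope ring_scope.

Definition stochastic (R : numDomainType) (T : finType) (p : T -> T -> R) : Prop :=
  (forall x y, 0 <= p x y) /\ (forall x, \sum_(y : T) p x y = 1).

Definition lumpable (R : numDomainType) (T : finType) (p : T -> T -> R)
  (L : {set {set T}}) : Prop :=
  forall B B', B \in L -> B' \in L -> forall x y, x \in B -> y \in B ->
    \sum_(z in B') p x z = \sum_(z in B') p y z.

Definition is_lumping (R : numDomainType) (T : finType) (p : T -> T -> R)
  (L : {set {set T}}) : Prop :=
  partition L [set: T] /\ lumpable p L.

Definition prodX (I : finType) (X : I -> finType) : finType :=
  {dffun forall i : I, X i}.

Definition sprec (I : finType) (prec : rel I) (j i : I) : bool := prec j i && (j != i).

(* Generalized crested product: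
   p(x,y) = sum_i p0_i P_i(x_i,y_i) prod_{j in H(i)} 1/|X_j| prod_{j notin H[i]} delta(x_j,y_j),
   with H(i) = {j | j < i}, H[i] = {j | j <= i}. *)
Definition crested (R : numFieldType) (I : finType) (prec : rel I) (X : I -> finType)
  (p0 : I -> R) (P : forall i, X i -> X i -> R) (x y : prodX X) : R :=
  \sum_(i : I) (p0 i * P i (x i) (y i)
     * (\prod_(j : I | sprec prec j i) (#|X j|%:R)^-1)
     * (\prod_(j : I | ~~ prec j i) (x j == y j)%:R)).

(* Phi i : X -> {set {set X i}} encodes a map X_{A(i)} -> \mathbb L_i
   (it is required separately to depend only on the coordinates in A(i)). *)
Definition approx (I : finType) (X : I -> finType)
  (Phi : forall i, prodX X -> {set {set X i}}) (x y : prodX X) : bool :=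
  [forall i : I, (Phi i x == Phi i y) && (pblock (Phi i x) (x i) == pblock (Phi i x) (y i))].

Definition prod_lumping (I : finType) (X : I -> finType)
  (Phi : forall i, prodX X -> {set {set X i}}) : {set {set prodX X}} :=
  [set [set y | approx Phi x y] | x : prodX X].

(* Main.v *)
Require Import Defs.
From mathcomp Require Import all_boot all_order all_algebra.
Import Order.TTheory GRing.Theory Num.Theory.
Local Open Scope ring_scope.
Definition swap1 {T : eqType} (a b v : T) := if v == a then b else if v == b then a else v.
Lemma swap1_eq (T : eqType) (a b v : T) : (b == swap1 a b v) = (a == v).
Proof. rewrite /swap1; have [e|na] := eqVneq v a;first by subst v; rewrite !eqxx.
have [e|nb] := eqVneq v b; first by subst v; rewrite (negPf na).
by rewrite eq_sym (negPf nb). Qed.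
Lemma swap1K (T : eqType) (a b : T) : involutive (swap1 a b).
Proof. move=> v; rewrite /swap1; have [e|na] := eqVneq v a.
  by subst v; have [e|] := eqVneq b a; rewrite ?eqxx.
have [e|nb] := eqVneq v b; first by subst v; rewrite eqxx.
by rewrite (negPf na) (negPf nb). Qed.
Lemma swap1_a (T : eqType) (a b : T) : swap1 a b a = b.
Proof. by rewrite /swap1 eqxx. Qed.
Definition swp {I : finType} {X : I -> finType} (S : pred I) (a b : forall j, X j) (z : prodX X) : prodX X :=
  @finfun I (fun j => X j) (fun j => if S j then swap1 (a j) (b j) (z j) else z j).
Lemma swpE (I : finType) (X : I -> finType) S a b (z : prodX X) j : swp S a b z j = if S j then swap1 (a j) (b j) (z j) else z j.
Proof. by rewrite /swp ffunE. Qed.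
Lemma swpK (I : finType) (X : I -> finType) S a b : involutive (@swp I X S a b).
Proof. move=> z; apply/ffunP => j; rewrite !swpE; case: (S j) => //; exact: swap1K. Qed.
Lemma prod_bool (R : numDomainType) (I : finType) (P : pred I) (b : pred I) :
  \prod_(j | P j) ((b j)%:R : R) = ([forall j, P j ==> b j])%:R.
Proof.
case: forallP => [H|/forallP/forallPn[j]]; first by rewrite big1 // => j /(implyP (H j)) ->.
rewrite negb_imply => /andP[Pj bj]; rewrite (bigD1 j) //= (negPf bj) mul0r //.
Qed.
Lemma lump_sum (R : numDomainType) (T : finType) (p : T -> T -> R) (Q : {set {set T}}) (G : T -> R) :
  is_lumping p Q -> (forall t t', pblock Q t = pblock Q t' -> G t = G t') ->
  forall a b, pblock Q a = pblock Q b -> \sum_t p a t * G t = \sum_t p b t * G t.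
Proof.
move=> [/and3P[/eqP cov triv n0] lump] HG a b eab.
have memQ t : pblock Q t \in Q by apply: pblock_mem; rewrite cov inE.
have inB t : t \in pblock Q t by rewrite mem_pblock cov inE.
have E c : \sum_t p c t * G t = \sum_(B in Q) (\sum_(t in B) p c t) * G (odflt a [pick x in B]).
  rewrite (partition_big (pblock Q) (mem Q)) //=; apply: eq_bigr => B HB.
  have rB : odflt a [pick x in B] \in B.
    case: pickP => [x Hx|H0] //=; case/negP: n0; suff <-: B = set0 by [].
    by apply/setP => x; rewrite inE; have := H0 x.
  rewrite big_distrl /=; apply: eq_big => t.
    by apply/eqP/idP => [<-|tB]; [exact: inB | exact: def_pblock].
  move=> /eqP tB; congr (_ * _); apply: HG.
  by rewrite tB (def_pblock triv HB rB).
rewrite !E; apply: eq_bigr => B HB; congr (_ * _).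
apply: (lump (pblock Q a) B (memQ a) HB); [exact: inB | rewrite eab; exact: inB].
Qed.
Lemma approx_sym (I : finType) (X : I -> finType) (Phi : forall i, prodX X -> {set {set X i}}) x y :
  approx Phi x y -> approx Phi y x.
Proof.
move=> /forallP H; apply/forallP => i; case/andP: (H i) => /eqP e /eqP b.
by rewrite -e eqxx b eqxx.
Qed.
Lemma approx_trans (I : finType) (X : I -> finType) (Phi : forall i, prodX X -> {set {set X i}}) x y z :
  approx Phi x y -> approx Phi y z -> approx Phi x z.
Proof.
move=> /forallP H1 /forallP H2; apply/forallP => i.
case/andP: (H1 i) => /eqP e1 /eqP b1; case/andP: (H2 i) => /eqP e2 /eqP b2.
by rewrite b1 e1 b2 e2 !eqxx.
Qed.
From mathcomp Require Import ring.
Arguments approx_sym {I X Phi x y}.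
Arguments approx_trans {I X Phi x y z}.
Arguments swpK {I X} S a b.

Theorem theorem7 (R : realFieldType) (I : finType) (prec : rel I)
  (prec_refl : reflexive prec) (prec_anti : antisymmetric prec)
  (prec_trans : transitive prec)
  (X : I -> finType) (HX : forall i, (1 < #|X i|)%N)
  (P : forall i, X i -> X i -> R) (HP : forall i, stochastic (P i))
  (p0 : I -> R) (Hp0 : forall i, 0 < p0 i) (Hp0s : \sum_(i : I) p0 i = 1)
  (Phi : forall i, prodX X -> {set {set X i}})
  (HPhi_dep : forall i (x y : prodX X),
     (forall j, sprec prec i j -> x j = y j) -> Phi i x = Phi i y)
  (HPhi_lump : forall i (x : prodX X), is_lumping (P i) (Phi i x))
  (HPhi_comp : forall i (x y : prodX X),
     (forall j, sprec prec i j ->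
        Phi j x = Phi j y /\ pblock (Phi j x) (x j) = pblock (Phi j x) (y j)) ->
     Phi i x = Phi i y) :
  lumpable (crested prec p0 P) (prod_lumping Phi).
Proof.
have lt k j : sprec prec k j ->
    (#|[set l | sprec prec j l]| < #|[set l | sprec prec k l]|)%N.
  move=> /andP[kj nkj]; apply: proper_card; apply/properP; split.
    apply/subsetP => l; rewrite !inE /sprec => /andP[jl njl]; rewrite (prec_trans _ _ _ kj jl) /=.
    apply/eqP => e; subst l; case/eqP: nkj; apply: prec_anti; by rewrite kj jl.
  by exists j; rewrite !inE /sprec ?kj ?nkj ?eqxx ?andbF.
have L1 (z z' : prodX X) : (forall j, z j = z' j \/
     (Phi j z = Phi j z' /\ pblock (Phi j z) (z j) = pblock (Phi j z) (z' j))) ->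
     approx Phi z z'.
  move=> H.
  have PhiE k : Phi k z = Phi k z'.
    suff S : forall n k, (#|[set j | sprec prec k j]| <= n)%N -> Phi k z = Phi k z'.
      exact: (S _ k (leqnn _)).
    elim=> [|n IH] {}k Hk; apply: HPhi_comp => j Hkj; have := lt k j Hkj.
      by move: Hk; rewrite leqn0 => /eqP ->; rewrite ltn0.
    move=> ltjk; have Ej : Phi j z = Phi j z'.
      by apply: IH; rewrite -ltnS; apply: leq_trans ltjk Hk.
    by split => //; case: (H j) => [->|[_ ->]].
  apply/forallP => i; rewrite {1}(PhiE i) eqxx /=.
  by case: (H i) => [->|[_ ->]].
move=> B B' /imsetP[x0 _ ->] /imsetP[w _ ->] x y; rewrite !inE => hx hy.
have hxy : approx Phi x y := approx_trans (approx_sym hx) hy.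
set S := [set z | approx Phi w z].
have memS z z' : approx Phi z z' -> (z \in S) = (z' \in S).
  move=> hz; rewrite !inE; apply/idP/idP => h.
    exact: approx_trans h hz.
  exact: approx_trans h (approx_sym hz).
rewrite /crested [LHS]exchange_big [RHS]exchange_big /=; apply: eq_bigr => i _.
have re (a b c d : R) : a * b * c * d = (a * c) * (b * d) by ring.
under eq_bigr do rewrite re; under [RHS]eq_bigr do rewrite re.
rewrite -!mulr_sumr; congr (_ * _).
under eq_bigr do rewrite prod_bool; under [RHS]eq_bigr do rewrite prod_bool.
have F1 (a z : prodX X) : [forall j, ~~ prec j i ==> (a j == z j)] ->
    forall k, k = i \/ ~~ prec k i -> Phi k z = Phi k a.
  move=> /forallP Ea k hk; apply: HPhi_dep => l /andP[kl nkl].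
  have nl : ~~ prec l i.
    case: hk => [e|nk].
      subst k; apply/negP => li; case/eqP: nkl; apply: prec_anti; by rewrite kl li.
    by apply: contra nk => li; exact: prec_trans _ _ _ kl li.
  by apply/esym/eqP; exact: (implyP (Ea l) nl).
have step1 : \sum_(z in S) P i (x i) (z i) * [forall j, ~~ prec j i ==> (x j == z j)]%:R
  = \sum_(z in S) P i (x i) (z i) * [forall j, ~~ prec j i ==> (y j == z j)]%:R.
  rewrite (reindex_inj (can_inj (swpK (fun j => ~~ prec j i) y x))) /=.
  set h := swp _ _ _.
  rewrite [LHS]big_mkcond [RHS]big_mkcond; apply: eq_bigr => z _.
  have hi : h z i = z i by rewrite swpE prec_refl.
  have hE : [forall j, ~~ prec j i ==> (x j == h z j)] = [forall j, ~~ prec j i ==> (y j == z j)].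
    apply: eq_forallb => j; rewrite swpE; case: (prec j i) => //=; exact: swap1_eq.
  rewrite hi hE; case Ez: [forall j, ~~ prec j i ==> (y j == z j)]; last by rewrite !mulr0 !if_same.
  rewrite (memS (h z) z) //; apply: approx_sym; apply: L1 => j.
  case: (boolP (prec j i)) => pj; first by left; rewrite swpE pj.
  right.
  have Ezj : y j = z j by apply/eqP; exact: (implyP (forallP Ez j) pj).
  have Pz := F1 y z Ez j (or_intror pj).
  have Ph := F1 x (h z) (ltac:(by rewrite hE)) j (or_intror pj).
  have hzj : h z j = x j by rewrite swpE pj -Ezj swap1_a.
  case/andP: (forallP hxy j) => /eqP e /eqP b.
  rewrite Pz Ph hzj -Ezj -e; split => //; exact/esym.
have step2 : \sum_(z in S) P i (x i) (z i) * [forall j, ~~ prec j i ==> (y j == z j)]%:R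
  = \sum_(z in S) P i (y i) (z i) * [forall j, ~~ prec j i ==> (y j == z j)]%:R.
  have mk (c : X i) : \sum_(z in S) P i c (z i) * [forall j, ~~ prec j i ==> (y j == z j)]%:R =
     \sum_t P i c t * \sum_(z : prodX X | z i == t) ((z \in S) && [forall j, ~~ prec j i ==> (y j == z j)])%:R.
    rewrite big_mkcond (partition_big (fun z : prodX X => z i) predT) //=; apply: eq_bigr => t _.
    rewrite mulr_sumr; apply: eq_bigr => z /eqP <-.
    by case: (z \in S) => /=; rewrite ?mulr0.
  rewrite !mk.
  apply: (@lump_sum _ _ _ _ (fun t => \sum_(z : prodX X | z i == t) ((z \in S) && [forall j, ~~ prec j i ==> (y j == z j)])%:R) (HPhi_lump i y)); last first.
    by case/andP: (forallP hxy i) => /eqP e /eqP b; rewrite -e.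
  move=> t t' bt.
  rewrite [RHS](reindex_inj (can_inj (swpK (pred1 i) (dfwith y t) (dfwith y t')))).
  set h := swp _ _ _.
  have hi z : h z i = swap1 t t' (z i) by rewrite swpE /= eqxx !dfwith_in.
  have hj z j : j != i -> h z j = z j by move=> nj; rewrite swpE /= (negPf nj).
  apply: eq_big => z.
    by rewrite hi [RHS]eq_sym swap1_eq eq_sym.
  move=> /eqP zi.
  have hE : [forall j, ~~ prec j i ==> (y j == h z j)] = [forall j, ~~ prec j i ==> (y j == z j)].
    apply: eq_forallb => j; case: (eqVneq j i) => [->|nj]; first by rewrite prec_refl.
    by rewrite hj.
  rewrite hE; case Ez: [forall j, ~~ prec j i ==> (y j == z j)]; last by rewrite !andbF.
  rewrite !andbT (memS z (h z)) //; apply: L1 => j.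
  case: (eqVneq j i) => [->|nj]; last by left; rewrite hj.
  right.
  have Fz := F1 y z Ez i (or_introl erefl).
  have Fh := F1 y (h z) (ltac:(by rewrite hE)) i (or_introl erefl).
  by rewrite Fz Fh hi zi swap1_a.
by rewrite step1 step2.
Qed.
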